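(* Let $(K,\mathcal O,k)$ be a $p$-modular system with $\mathcal O$ complete, let $\pi$ generate the maximal ideal of $\mathcal O$, and let $\Lambda$ be an $\mathcal O$-order in a separable $K$-algebra. For every $s\geq d(\Lambda)$, the image of the canonical map $\operatorname{Aut}_{\mathcal O}(\Lambda)\to\operatorname{Aut}_{\mathcal O}(\Lambda/\pi^{s+1}\Lambda)$ equals the image of the canonical map $\operatorname{Aut}_{\mathcal O}(\Lambda/\pi^{2s+1}\Lambda)\to\operatorname{Aut}_{\mathcal O}(\Lambda/\pi^{s+1}\Lambda)$.
   Context: A $p$-modular system $(K,\mathcal O,k)$ consists of a discrete valuation ring $\mathcal O$ of characteristic zero with fraction field $K$ and residue field $k$ of characteristic $p>0$. An $\mathcal O$-order in a separable $K$-algebra is an $\mathcal O$-algebra, free and finitely generated as an $\mathcal O$-module, whose scalar extension to $K$ is separable. The depth $d(\Lambda)$ is defined by $\pi^{d(\Lambda)}\mathcal O=I(\Lambda)$, where $I(\Lambda)$ is the (nonzero) ideal of elements of $\mathcal O$ annihilating the Hochschild cohomology $H^1(\Lambda,T)$ for all $\Lambda$-$\Lambda$-bimodules $T$. *)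

(* Defs.v *)
From HB Require Import structures.
From mathcomp Require Import all_boot all_order all_algebra.
From mathcomp Require Import fraction.
Set Implicit Arguments. Unset Strict Implicit. Unset Printing Implicit Defensive.
Import Order.TTheory GRing.Theory Num.Theory.
Local Open Scope ring_scope.

Definition pdvd (O : idomainType) (pi : O) (m : nat) (x : O) : Prop :=
  exists c : O, x = pi ^+ m * c.

Definition dvr_uniformizer (O : idomainType) (pi : O) : Prop :=
  [/\ pi != 0, pi \isn't a GRing.unit &
      forall x : O, x != 0 -> exists (u : O) (m : nat),
          u \is a GRing.unit /\ x = u * pi ^+ m].

(* (K, O, k) is a p-modular system, K = Frac O, k = O / pi O:
   O is a DVR of characteristic 0 whose residue field has characteristic p *)
Definition pmodular_system (p : nat) (O : idomainType) (pi : O) : Prop :=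
  [/\ dvr_uniformizer pi,
      (forall m : nat, (0 < m)%N -> (m%:R : O) != 0),
      prime p &
      pdvd pi 1 (p%:R)].

Definition pi_complete (O : idomainType) (pi : O) : Prop :=
  forall a : nat -> O,
    (forall N : nat, exists M : nat, forall i j : nat,
        (M <= i)%N -> (M <= j)%N -> pdvd pi N (a i - a j)) ->
    exists l : O, forall N : nat, exists M : nat, forall i : nat,
        (M <= i)%N -> pdvd pi N (l - a i).

Definition is_basis (O : idomainType) (Lam : algType O) (n : nat)
  (b : 'I_n -> Lam) : Prop :=
  forall x : Lam, exists! c : 'I_n -> O, x = \sum_(i < n) c i *: b i.

(* Separability of a finite-dimensional K-algebra A given by a K-basis with
   structure constants cst (b_i b_j = sum_k cst i j k b_k) and unit
   coordinates u (1 = sum_k u k b_k): existence of a separability idempotent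
   e = sum_{i,j} e i j (b_i (x) b_j) in A (x)_K A^op, i.e. mu(e) = 1 and
   a e = e a for all a in A (A projective as A (x) A^op-module). *)
Definition separability_idempotent (K : fieldType) (n : nat)
  (cst : 'I_n -> 'I_n -> 'I_n -> K) (u : 'I_n -> K) (e : 'I_n -> 'I_n -> K)
  : Prop :=
  (forall k : 'I_n, \sum_(i < n) \sum_(j < n) e i j * cst i j k = u k) /\
  (forall l k m : 'I_n,
      \sum_(i < n) e i m * cst l i k = \sum_(j < n) e k j * cst j l m).

(* K (x)_O Lam
   has the K-basis 1 (x) b_i with the same structure constants as Lam. *)
Definition is_order (O : idomainType) (Lam : algType O) : Prop :=
  exists (n : nat) (b : 'I_n -> Lam),
    is_basis b /\
    forall (cst : 'I_n -> 'I_n -> 'I_n -> O) (u : 'I_n -> O),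
      (forall i j : 'I_n, b i * b j = \sum_(k < n) cst i j k *: b k) ->
      1 = \sum_(k < n) u k *: b k ->
      exists e : 'I_n -> 'I_n -> {fraction O},
        separability_idempotent (fun i j k => tofrac (cst i j k))
                                (fun k => tofrac (u k)) e.

Definition bimodule (O : idomainType) (Lam : algType O) (T : zmodType)
  (la : Lam -> T -> T) (ra : T -> Lam -> T) : Prop :=
  (forall x y t, la (x + y) t = la x t + la y t) /\
  (forall x t t', la x (t + t') = la x t + la x t') /\
  (forall x y t, ra t (x + y) = ra t x + ra t y) /\
  (forall x t t', ra (t + t') x = ra t x + ra t' x) /\
  (forall t, la 1 t = t /\ ra t 1 = t) /\
  (forall x y t, la (x * y) t = la x (la y t) /\ ra t (x * y) = ra (ra t x) y) /\
  (forall x y t, la x (ra t y) = ra (la x t) y) /\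
  (forall (a : O) t, la (a *: 1) t = ra t (a *: 1)).

Definition derivation (O : idomainType) (Lam : algType O) (T : zmodType)
  (la : Lam -> T -> T) (ra : T -> Lam -> T) (delta : Lam -> T) : Prop :=
  [/\ (forall x y, delta (x + y) = delta x + delta y),
      (forall (a : O) x, delta (a *: x) = la (a *: 1) (delta x)) &
      (forall x y, delta (x * y) = ra (delta x) y + la x (delta y))].

Definition inner_derivation (O : idomainType) (Lam : algType O) (T : zmodType)
  (la : Lam -> T -> T) (ra : T -> Lam -> T) (delta : Lam -> T) : Prop :=
  exists t : T, forall x, delta x = la x t - ra t x.

(* lambda \in I(Lam): lambda annihilates H^1(Lam, T) = Der / Inn for every
   Lam-Lam-bimodule T, i.e. lambda * delta is inner for every derivation. *)
Definition annihilates_H1 (O : idomainType) (Lam : algType O) (lambda : O)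
  : Prop :=
  forall (T : zmodType) (la : Lam -> T -> T) (ra : T -> Lam -> T),
    bimodule la ra ->
    forall delta : Lam -> T, derivation la ra delta ->
      inner_derivation la ra (fun x => la (lambda *: 1) (delta x)).

Definition is_depth (O : idomainType) (pi : O) (Lam : algType O) (d : nat)
  : Prop :=
  forall lambda : O, annihilates_H1 Lam lambda <-> pdvd pi d lambda.

Definition congr (O : idomainType) (Lam : algType O) (pi : O) (m : nat)
  (x y : Lam) : Prop :=
  exists z : Lam, x - y = pi ^+ m *: z.

Definition is_aut (O : idomainType) (Lam : algType O) (f : Lam -> Lam) : Prop :=
  [/\ (forall x y, f (x + y) = f x + f y),
      (forall (a : O) x, f (a *: x) = a *: f x),
      (forall x y, f (x * y) = f x * f y),
      f 1 = 1 & bijective f].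

(* O-algebra automorphisms of Lam / pi^m Lam, represented (setoid-style) by
   maps Lam -> Lam compatible with congruence mod pi^m; two such maps
   represent the same automorphism iff they agree pointwise mod pi^m. *)
Definition is_aut_mod (O : idomainType) (Lam : algType O) (pi : O) (m : nat)
  (f : Lam -> Lam) : Prop :=
  (forall x y, congr pi m x y -> congr pi m (f x) (f y)) /\
  (forall x y, congr pi m (f (x + y)) (f x + f y)) /\
  (forall (a : O) x, congr pi m (f (a *: x)) (a *: f x)) /\
  (forall x y, congr pi m (f (x * y)) (f x * f y)) /\
  congr pi m (f 1) 1 /\
  (forall x y, congr pi m (f x) (f y) -> congr pi m x y) /\
  (forall y, exists x, congr pi m (f x) y).

(* Main.v *)
Require Import Defs.
From HB Require Import structures.
From mathcomp Require Import all_boot all_order all_algebra.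
From mathcomp Require Import fraction zify.
From Stdlib Require Import ClassicalEpsilon.
Set Implicit Arguments. Unset Strict Implicit. Unset Printing Implicit Defensive.
Import Order.TTheory GRing.Theory Num.Theory.
Local Open Scope ring_scope.


Section DV.
Variables (O : idomainType) (pi : O) (Lam : algType O).

Definition dv (m : nat) (x : Lam) := exists z : Lam, x = pi ^+ m *: z.
Definition eqm m (x y : Lam) := dv m (x - y).

Lemma dv0 m : dv m 0. Proof. by exists 0; rewrite scaler0. Qed.
Lemma dvD m x y : dv m x -> dv m y -> dv m (x + y).
Proof. by move=> [z ->] [w ->]; exists (z + w); rewrite scalerDr. Qed.
Lemma dvN m x : dv m x -> dv m (- x).
Proof. by move=> [z ->]; exists (- z); rewrite scalerN. Qed.
Lemma dvB m x y : dv m x -> dv m y -> dv m (x - y).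
Proof. by move=> hx hy; apply: dvD => //; apply: dvN. Qed.
Lemma dvMl m x y : dv m x -> dv m (y * x).
Proof. by move=> [z ->]; exists (y * z); rewrite scalerAr. Qed.
Lemma dvMr m x y : dv m x -> dv m (x * y).
Proof. by move=> [z ->]; exists (z * y); rewrite scalerAl. Qed.
Lemma dvZ m a x : dv m x -> dv m (a *: x).
Proof. by move=> [z ->]; exists (a *: z); rewrite !scalerA mulrC. Qed.
Lemma dv_le k m x : (k <= m)%N -> dv m x -> dv k x.
Proof.
move=> km [z ->]; exists (pi ^+ (m - k) *: z).
by rewrite scalerA -exprD subnKC.
Qed.
Lemma dvX j k x : dv k x -> dv (j + k) (pi ^+ j *: x).
Proof. by move=> [z ->]; exists z; rewrite scalerA -exprD. Qed.
Lemma dvP m z : dv m (pi ^+ m *: z). Proof. by exists z. Qed.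
Lemma dvM2 i j x y : dv i x -> dv j y -> dv (i + j) (x * y).
Proof.
move=> [z ->] [w ->]; exists (z * w).
by rewrite -scalerAl -scalerAr scalerA -exprD.
Qed.
Lemma dv_sum m (I : finType) (F : I -> Lam) :
  (forall i, dv m (F i)) -> dv m (\sum_i F i).
Proof.
move=> h; apply: (big_ind (dv m)); [exact: dv0| exact: dvD |] => i _; exact: h.
Qed.

Lemma eqm_refl m x : eqm m x x. Proof. by rewrite /eqm subrr; apply: dv0. Qed.
Lemma eqm_sym m x y : eqm m x y -> eqm m y x.
Proof. by move=> h; rewrite /eqm -opprB; apply: dvN. Qed.
Lemma eqm_trans m x y z : eqm m x y -> eqm m y z -> eqm m x z.
Proof.
move=> h1 h2; have := dvD h1 h2.
by rewrite /eqm addrA subrK.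
Qed.
Lemma eqmD m x y x' y' : eqm m x x' -> eqm m y y' -> eqm m (x + y) (x' + y').
Proof. by move=> h1 h2; have := dvD h1 h2; rewrite /eqm opprD addrACA. Qed.
Lemma eqmN m x x' : eqm m x x' -> eqm m (- x) (- x').
Proof. by move=> h; have := dvN h; rewrite /eqm opprB opprK addrC. Qed.
Lemma eqmB m x y x' y' : eqm m x x' -> eqm m y y' -> eqm m (x - y) (x' - y').
Proof. by move=> h1 h2; apply: eqmD => //; apply: eqmN. Qed.
Lemma eqmM m x y x' y' : eqm m x x' -> eqm m y y' -> eqm m (x * y) (x' * y').
Proof.
move=> h1 h2; rewrite /eqm.
have -> : x * y - x' * y' = (x - x') * y + x' * (y - y').
  by rewrite mulrBl mulrBr addrA subrK.
by apply: dvD; [apply: dvMr | apply: dvMl].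
Qed.
Lemma eqmZ m a x x' : eqm m x x' -> eqm m (a *: x) (a *: x').
Proof. by move=> h; rewrite /eqm -scalerBr; apply: dvZ. Qed.
Lemma eqm_le k m x y : (k <= m)%N -> eqm m x y -> eqm k x y.
Proof. exact: dv_le. Qed.
Lemma eqm_dv m x y : eqm m x y -> dv m y -> dv m x.
Proof. by move=> h1 h2; have := dvD h1 h2; rewrite subrK. Qed.
Lemma eqm_eq m x y : x = y -> eqm m x y.
Proof. by move=> ->; apply: eqm_refl. Qed.
Lemma congr_eqm m x y : congr pi m x y <-> eqm m x y.
Proof. by []. Qed.
End DV.


Section Ring.
Variables (O : idomainType) (pi : O).
Hypothesis Hpi : dvr_uniformizer pi.

Lemma pi_neq0 : pi != 0. Proof. by case: Hpi. Qed.
Lemma pi_nonunit : pi \isn't a GRing.unit. Proof. by case: Hpi. Qed.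

Lemma pdvd_all0 a : (forall N, pdvd pi N a) -> a = 0.
Proof.
move=> h; case: (eqVneq a 0) => [//|a0]; exfalso.
case: Hpi => _ pnu /(_ a a0) [u [m [uu au]]].
have [c hc] := h m.+1.
have : pi ^+ m * u = pi ^+ m * (pi * c) by rewrite mulrC -au hc exprSr mulrA.
move/(mulfI (expf_neq0 m pi_neq0)) => uc.
move: pnu => /negP; apply; apply/unitrPr; exists (c * u^-1).
by rewrite mulrA -uc mulrV.
Qed.

Lemma unit_near1 x : pdvd pi 1 (x - 1) -> x \is a GRing.unit.
Proof.
move=> [c hc].
have x0 : x != 0.
  apply/negP => /eqP x0; move: hc; rewrite x0 sub0r expr1 => h.
  move: pi_nonunit => /negP; apply; apply/unitrPr; exists (- c).
  by rewrite mulrN -h opprK.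
case: Hpi => _ pnu /(_ x x0) [u [m [uu xu]]].
case: m xu => [|m] xu; first by rewrite xu expr0 mulr1.
exfalso; move: pnu => /negP; apply; apply/unitrPr.
exists (u * pi ^+ m - c).
have e : 1 = x - (x - 1) by rewrite opprB addrC subrK.
by rewrite [RHS]e {1}xu hc expr1 exprS mulrBr mulrCA.
Qed.
End Ring.

Section Basis.
Variables (O : idomainType) (pi : O) (Lam : algType O) (n : nat) (b : 'I_n -> Lam).
Hypothesis Hb : is_basis b.

Definition crd (x : Lam) : 'I_n -> O :=
  proj1_sig (constructive_indefinite_description _ (Hb x)).

Lemma crdK x : x = \sum_i crd x i *: b i.
Proof. by rewrite /crd; case: constructive_indefinite_description => c [] /=. Qed.

Lemma crd_uniq x c : x = \sum_i c i *: b i -> crd x = c.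
Proof.
rewrite /crd; case: constructive_indefinite_description => c' [] /= _ h.
by move=> hc; apply: h.
Qed.

Lemma crdD x y i : crd (x + y) i = crd x i + crd y i.
Proof.
have h : x + y = \sum_i (crd x i + crd y i) *: b i.
  by rewrite {1}(crdK x) {1}(crdK y) -big_split; apply: eq_bigr => j _; rewrite scalerDl.
by rewrite (crd_uniq h).
Qed.

Lemma crdZ a x i : crd (a *: x) i = a * crd x i.
Proof.
have h : a *: x = \sum_i (a * crd x i) *: b i.
  by rewrite {1}(crdK x) scaler_sumr; apply: eq_bigr => j _; rewrite scalerA.
by rewrite (crd_uniq h).
Qed.

Lemma crdN (x : Lam) i : crd (- x) i = - crd x i.
Proof. by rewrite -scaleN1r crdZ mulN1r. Qed.
Lemma crdB (x y : Lam) i : crd (x - y) i = crd x i - crd y i.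
Proof. by rewrite crdD crdN. Qed.
Lemma crd0 i : crd 0 i = 0.
Proof. by rewrite -(scale0r (0 : Lam)) crdZ mul0r. Qed.

Lemma crd_sum (I : finType) (c : I -> O) (v : I -> Lam) i :
  crd (\sum_j c j *: v j) i = \sum_j c j * crd (v j) i.
Proof.
have h : \sum_j c j *: v j = \sum_i (\sum_j c j * crd (v j) i) *: b i.
  under [RHS]eq_bigr do rewrite scaler_suml.
  rewrite [RHS]exchange_big /=; apply: eq_bigr => j _.
  by rewrite {1}(crdK (v j)) scaler_sumr; apply: eq_bigr => k _; rewrite scalerA.
by rewrite (crd_uniq h).
Qed.

Lemma crd_b j i : crd (b j) i = (i == j)%:R.
Proof.
have h : b j = \sum_i (i == j)%:R *: b i.
  rewrite (bigD1 j) //= eqxx scale1r big1 ?addr0 //.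
  by move=> k /negbTE ->; rewrite scale0r.
by rewrite (crd_uniq h).
Qed.

Lemma crd_inj x y : (forall i, crd x i = crd y i) -> x = y.
Proof.
move=> h; rewrite (crdK x) (crdK y); apply: eq_bigr => i _; by rewrite h.
Qed.

Lemma dv_crd m x : dv pi m x <-> forall i, pdvd pi m (crd x i).
Proof.
split.
  by move=> [z ->] i; exists (crd z i); rewrite crdZ.
move=> h; exists (\sum_i proj1_sig (constructive_indefinite_description _ (h i)) *: b i).
rewrite {1}(crdK x) scaler_sumr; apply: eq_bigr => i _.
by case: constructive_indefinite_description => c /= ->; rewrite scalerA.
Qed.

Hypothesis Hpi : dvr_uniformizer pi.

Lemma scale_inj m (z z' : Lam) : pi ^+ m *: z = pi ^+ m *: z' -> z = z'.
Proof.
move=> h; apply: crd_inj => i.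
have := congr1 (fun v => crd v i) h; rewrite /= !crdZ.
exact: (mulfI (expf_neq0 m (pi_neq0 Hpi))).
Qed.

Lemma dv_all0 (x : Lam) : (forall N, dv pi N x) -> x = 0.
Proof.
move=> h; apply: crd_inj => i; rewrite crd0.
by apply: (pdvd_all0 Hpi) => N; have /dv_crd := h N; apply.
Qed.

Definition lin (f : Lam -> Lam) :=
  (forall x y, f (x + y) = f x + f y) /\ (forall a x, f (a *: x) = a *: f x).

Lemma lin0 f : lin f -> f 0 = 0.
Proof.
move=> hf; have -> : (0 : Lam) = (0 : O) *: (0 : Lam) by rewrite scale0r.
by rewrite (proj2 hf) !scale0r.
Qed.
Lemma linB f (x y : Lam) : lin f -> f (x - y) = f x - f y.
Proof. by move=> hf; rewrite (proj1 hf) -scaleN1r (proj2 hf) scaleN1r. Qed.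

Lemma lin_sum f (I : finType) (c : I -> O) (v : I -> Lam) : lin f ->
  f (\sum_j c j *: v j) = \sum_j c j *: f (v j).
Proof.
move=> hf; apply: (big_rec2 (fun y1 y2 => f y1 = y2)); first exact: lin0.
by move=> j y1 y2 _ <-; rewrite (proj1 hf) (proj2 hf).
Qed.

Lemma lin_expand f (x : Lam) : lin f -> f x = \sum_j crd x j *: f (b j).
Proof. by move=> hf; rewrite {1}(crdK x) lin_sum. Qed.

Lemma Lam_complete : pi_complete pi -> forall v : nat -> Lam,
  (forall N, exists M, forall i j, (M <= i)%N -> (M <= j)%N -> dv pi N (v i - v j)) ->
  exists l : Lam, forall N, exists M, forall i, (M <= i)%N -> dv pi N (l - v i).
Proof.
move=> Hc v hv.
have hl : forall k : 'I_n, exists l : O, forall N, exists M, forall i, (M <= i)%N ->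
    pdvd pi N (l - crd (v i) k).
  move=> k; apply: Hc => N; have [M hM] := hv N; exists M => i j hi hj.
  by have /dv_crd := hM i j hi hj => /(_ k); rewrite crdB.
pose l k := proj1_sig (constructive_indefinite_description _ (hl k)).
have hlk k : forall N, exists M, forall i, (M <= i)%N -> pdvd pi N (l k - crd (v i) k).
  by rewrite /l; case: constructive_indefinite_description.
exists (\sum_k l k *: b k) => N.
have [M hM] := hv N; exists M => i hi; apply/dv_crd => k.
rewrite crdB crd_sum.
have -> : \sum_j l j * crd (b j) k = l k.
  rewrite (bigD1 k) //= crd_b eqxx mulr1 big1 ?addr0 //.
  by move=> j /negbTE; rewrite crd_b eq_sym => ->; rewrite mulr0.
have [M' hM'] := hlk k N.
have h1 := hM' (maxn M' i) (leq_maxl _ _).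
have /dv_crd /(_ k) h2 := hM (maxn M' i) i (leq_trans hi (leq_maxr _ _)) hi.
move: h1 h2; rewrite crdB => [[c1 e1]] [c2 e2].
exists (c1 + c2); rewrite mulrDr -e1 -e2.
by rewrite addrA subrK.
Qed.
End Basis.


Lemma zmod4 (V : zmodType) (a c b e : V) : a - c - (b - e) = (a - b) - (c - e).
Proof. by rewrite !opprB addrACA [RHS]addrACA (addrC (- c)). Qed.

Section Sep.
Variables (O : idomainType) (Lam : algType O) (n : nat) (b : 'I_n -> Lam).
Hypothesis Hb : is_basis b.

Local Notation crd := (@crd _ _ _ _ Hb).

Definition bilin (beta : Lam -> Lam -> Lam) :=
  (forall v, lin (fun u => beta u v)) /\ (forall u, lin (beta u)).

Definition Lm (x : Lam) : 'M[O]_n := \matrix_(k, i) crd (x * b i) k.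
Definition Rm (y : Lam) : 'M[O]_n := \matrix_(j, l) crd (b j * y) l.
Definition Bf (beta : Lam -> Lam -> Lam) (t : 'M[O]_n) : Lam :=
  \sum_i \sum_j t i j *: beta (b i) (b j).

Lemma B_L beta x t : bilin beta ->
  Bf beta (Lm x *m t) = \sum_i \sum_j t i j *: beta (x * b i) (b j).
Proof.
move=> [h1 h2]; rewrite /Bf.
have e : forall i j, beta (x * b i) (b j) = \sum_k crd (x * b i) k *: beta (b k) (b j).
  by move=> i j; rewrite (lin_expand Hb (x * b i) (h1 (b j))).
transitivity (\sum_k \sum_j \sum_i (Lm x k i * t i j) *: beta (b k) (b j)).
  by apply: eq_bigr => k _; apply: eq_bigr => j _; rewrite mxE scaler_suml.
rewrite exchange_big /=.
transitivity (\sum_j \sum_i \sum_k (Lm x k i * t i j) *: beta (b k) (b j)).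
  by apply: eq_bigr => j _; rewrite exchange_big.
rewrite exchange_big /=.
apply: eq_bigr => i _; apply: eq_bigr => j _; rewrite e scaler_sumr.
by apply: eq_bigr => k _; rewrite mxE scalerA mulrC.
Qed.

Lemma B_R beta y t : bilin beta ->
  Bf beta (t *m Rm y) = \sum_i \sum_j t i j *: beta (b i) (b j * y).
Proof.
move=> [h1 h2]; rewrite /Bf.
have e : forall i j, beta (b i) (b j * y) = \sum_k crd (b j * y) k *: beta (b i) (b k).
  by move=> i j; rewrite (lin_expand Hb (b j * y) (h2 (b i))).
transitivity (\sum_i \sum_k \sum_j (t i j * Rm y j k) *: beta (b i) (b k)).
  by apply: eq_bigr => i _; apply: eq_bigr => k _; rewrite mxE scaler_suml.
apply: eq_bigr => i _; rewrite exchange_big /=.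
apply: eq_bigr => j _; rewrite e scaler_sumr.
by apply: eq_bigr => k _; rewrite mxE scalerA.
Qed.

Lemma BD beta t t' : Bf beta (t + t') = Bf beta t + Bf beta t'.
Proof.
rewrite /Bf -big_split; apply: eq_bigr => i _; rewrite -big_split.
by apply: eq_bigr => j _; rewrite mxE scalerDl.
Qed.
Lemma BZ beta a t : Bf beta (a *: t) = a *: Bf beta t.
Proof.
rewrite /Bf scaler_sumr; apply: eq_bigr => i _; rewrite scaler_sumr.
by apply: eq_bigr => j _; rewrite mxE scalerA.
Qed.
Lemma BN beta t : Bf beta (- t) = - Bf beta t.
Proof. by rewrite -scaleN1r BZ scaleN1r. Qed.
Lemma BB beta t t' : Bf beta (t - t') = Bf beta t - Bf beta t'.
Proof. by rewrite BD BN. Qed.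
Lemma B0 beta : Bf beta 0 = 0.
Proof. by rewrite -(subrr (0 : 'M[O]_n)) BB subrr. Qed.

Definition mulb (u v : Lam) := u * v.
Lemma bilin_mul : bilin mulb.
Proof.
split=> u; split=> [x y|a x]; rewrite /mulb ?mulrDl ?mulrDr //.
  by rewrite scalerAl.
by rewrite scalerAr.
Qed.

Definition mu := Bf mulb.

Lemma mu_L x t : mu (Lm x *m t) = x * mu t.
Proof.
rewrite /mu B_L; last exact: bilin_mul.
rewrite /Bf mulr_sumr; apply: eq_bigr => i _; rewrite mulr_sumr.
by apply: eq_bigr => j _; rewrite /mulb -mulrA scalerAr.
Qed.
Lemma mu_R y t : mu (t *m Rm y) = mu t * y.
Proof.
rewrite /mu B_R; last exact: bilin_mul.
rewrite /Bf mulr_suml; apply: eq_bigr => i _; rewrite mulr_suml.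
by apply: eq_bigr => j _; rewrite /mulb mulrA scalerAl.
Qed.

Lemma LmM x y : Lm (x * y) = Lm x *m Lm y.
Proof.
apply/matrixP => k i; rewrite !mxE.
rewrite -mulrA {1}(crdK Hb (y * b i)) mulr_sumr.
under eq_bigr do rewrite -scalerAr.
rewrite crd_sum; apply: eq_bigr => j _; by rewrite !mxE mulrC.
Qed.
Lemma RmM x y : Rm (x * y) = Rm x *m Rm y.
Proof.
apply/matrixP => j l; rewrite !mxE.
rewrite mulrA {1}(crdK Hb (b j * x)) mulr_suml.
under eq_bigr do rewrite -scalerAl.
rewrite crd_sum; apply: eq_bigr => m _; by rewrite !mxE.
Qed.
Lemma Lm1 : Lm 1 = 1%:M.
Proof. by apply/matrixP => k i; rewrite !mxE mul1r crd_b. Qed.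
Lemma Rm1 : Rm 1 = 1%:M.
Proof. by apply/matrixP => k i; rewrite !mxE mulr1 crd_b eq_sym. Qed.
Lemma LmD x y : Lm (x + y) = Lm x + Lm y.
Proof. by apply/matrixP => k i; rewrite !mxE mulrDl crdD. Qed.
Lemma RmD x y : Rm (x + y) = Rm x + Rm y.
Proof. by apply/matrixP => k i; rewrite !mxE mulrDr crdD. Qed.
Lemma LmZ a x : Lm (a *: x) = a *: Lm x.
Proof. by apply/matrixP => k i; rewrite !mxE -scalerAl crdZ. Qed.
Lemma RmZ a x : Rm (a *: x) = a *: Rm x.
Proof. by apply/matrixP => k i; rewrite !mxE -scalerAr crdZ. Qed.
Lemma Lm_s a : Lm (a *: 1) = a%:M.
Proof. by rewrite LmZ Lm1 scalemx1. Qed.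
Lemma Rm_s a : Rm (a *: 1) = a%:M.
Proof. by rewrite RmZ Rm1 scalemx1. Qed.

Definition t0 : 'M[O]_n := \matrix_(i, j) (crd 1 i * crd 1 j).
Lemma mu_t0 : mu t0 = 1.
Proof.
have e : (1 : Lam) = (\sum_i crd 1 i *: b i) * (\sum_j crd 1 j *: b j).
  by rewrite -!(crdK Hb) mulr1.
rewrite /mu /Bf [RHS]e mulr_suml.
apply: eq_bigr => i _; rewrite mulr_sumr; apply: eq_bigr => j _.
by rewrite mxE /mulb -scalerAl -scalerAr scalerA mulrC.
Qed.

Definition kp (t : 'M[O]_n) : bool := mu t == 0.
Definition KT := {t : 'M[O]_n | kp t}.
HB.instance Definition _ := [Choice of KT by <:].
Lemma kp0 : kp 0. Proof. by rewrite /kp /mu B0. Qed.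
Definition kzero : KT := exist kp 0 kp0.
Lemma kopp_p (t : KT) : kp (- val t).
Proof. by rewrite /kp /mu BN -/mu (eqP (valP t)) oppr0. Qed.
Definition kopp (t : KT) : KT := exist kp _ (kopp_p t).
Lemma kadd_p (t u : KT) : kp (val t + val u).
Proof. by rewrite /kp /mu BD -/mu (eqP (valP t)) (eqP (valP u)) addr0. Qed.
Definition kadd (t u : KT) : KT := exist kp _ (kadd_p t u).
Lemma kaddA : associative kadd. Proof. by move=> x y z; apply: val_inj; rewrite /= addrA. Qed.
Lemma kaddC : commutative kadd. Proof. by move=> x y; apply: val_inj; rewrite /= addrC. Qed.
Lemma kadd0 : left_id kzero kadd. Proof. by move=> x; apply: val_inj; rewrite /= add0r. Qed.
Lemma kaddN : left_inverse kzero kopp kadd. Proof. by move=> x; apply: val_inj; rewrite /= addNr. Qed.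
HB.instance Definition _ := GRing.isZmodule.Build KT kaddA kaddC kadd0 kaddN.

Lemma kla_p x (t : KT) : kp (Lm x *m val t).
Proof. by rewrite /kp mu_L (eqP (valP t)) mulr0. Qed.
Definition kla x (t : KT) : KT := exist kp _ (kla_p x t).
Lemma kra_p (t : KT) y : kp (val t *m Rm y).
Proof. by rewrite /kp mu_R (eqP (valP t)) mul0r. Qed.
Definition kra (t : KT) y : KT := exist kp _ (kra_p t y).
Lemma kdelta_p x : kp (Lm x *m t0 - t0 *m Rm x).
Proof. by rewrite /kp /mu BB -/mu mu_L mu_R mu_t0 mulr1 mul1r subrr. Qed.
Definition kdelta x : KT := exist kp _ (kdelta_p x).

Lemma kval_add (t u : KT) : val (t + u) = val t + val u. Proof. by []. Qed.
Lemma kval_opp (t : KT) : val (- t) = - val t. Proof. by []. Qed.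

Lemma kbimod : bimodule kla kra.
Proof.
split; first by move=> x y t; apply: val_inj; rewrite /= LmD mulmxDl.
split; first by move=> x t t'; apply: val_inj; rewrite /= mulmxDr.
split; first by move=> x y t; apply: val_inj; rewrite /= RmD mulmxDr.
split; first by move=> x t t'; apply: val_inj; rewrite /= mulmxDl.
split; first by move=> t; split; apply: val_inj; rewrite /= ?Lm1 ?Rm1 ?mul1mx ?mulmx1.
split; first by move=> x y t; split; apply: val_inj; rewrite /= ?LmM ?RmM mulmxA.
split; first by move=> x y t; apply: val_inj; rewrite /= mulmxA.
by move=> a t; apply: val_inj; rewrite /= Lm_s Rm_s mul_scalar_mx mul_mx_scalar.
Qed.

Lemma kder : derivation kla kra kdelta.
Proof.
split.
- move=> x y; apply: val_inj; rewrite /= LmD RmD mulmxDl mulmxDr.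
  by rewrite opprD addrACA.
- move=> a x; apply: val_inj; rewrite /= LmZ RmZ Lm_s mul_scalar_mx.
  by rewrite -scalemxAl -scalemxAr scalerBr.
- move=> x y; apply: val_inj; rewrite /= LmM RmM mulmxBl mulmxBr !mulmxA.
  by rewrite [RHS]addrC addrA subrK.
Qed.

Variable d : nat.
Variable pi : O.
Hypothesis Hann : annihilates_H1 Lam (pi ^+ d).

Lemma sep_exists : exists E : 'M[O]_n,
  \sum_i \sum_j E i j *: (b i * b j) = pi ^+ d *: 1 /\
  forall x beta, bilin beta ->
    \sum_i \sum_j E i j *: beta (x * b i) (b j) =
    \sum_i \sum_j E i j *: beta (b i) (b j * x).
Proof.
have [t ht] := Hann kbimod kder.
pose tt := val t.
have htt x : (pi ^+ d) *: (Lm x *m t0 - t0 *m Rm x) = Lm x *m tt - tt *m Rm x.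
  have := congr1 val (ht x); rewrite /= Lm_s mul_scalar_mx => ->.
  by [].
have mtt : mu tt = 0 by apply/eqP; exact: (valP t).
exists (pi ^+ d *: t0 - tt); split.
  have := BB mulb (pi ^+ d *: t0) tt; rewrite -/mu mtt subr0 /mu BZ -/mu mu_t0.
  by rewrite /Bf /mulb.
move=> x beta hb.
have e : Lm x *m (pi ^+ d *: t0 - tt) = (pi ^+ d *: t0 - tt) *m Rm x.
  apply/eqP; rewrite -subr_eq0; apply/eqP.
  rewrite mulmxBr mulmxBl -!scalemxAl -scalemxAr.
  by rewrite zmod4 -scalerBr htt subrr.
by rewrite -B_L // e B_R.
Qed.
End Sep.


Lemma tele (V : zmodType) (a b c : V) : a - b + (b - c) = a - c.
Proof. by rewrite addrA subrK. Qed.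
Lemma tele2 (V : zmodType) (a b c : V) : a - c - (b - c) = a - b.
Proof. by rewrite opprB addrA subrK. Qed.
Lemma zcoc (V : zmodType) (X Y Z r : V) : (X - Y) - (Z - r) + (Y - r) - (X - Z) = 0.
Proof. by rewrite [_ - (Z - r) + _]addrAC tele tele2 subrr. Qed.
Lemma zmod6 (V : zmodType) (a b c d e f : V) :
  (a - c) - (b - d) - (e - f) = (a - e) - (b + c - f) + d.
Proof.
rewrite !opprB opprD.
rewrite -!addrA; congr (_ + _).
rewrite (addrC f (-e)) [-b + (-e + f)]addrCA [d + (-e + _)]addrCA addrCA; congr (_ + _).
rewrite [-b + f]addrC [d + (f + _)]addrCA addrCA; congr (_ + _).
rewrite [RHS]addrCA; congr (_ + _).
by rewrite addrC.
Qed.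

Section Step.
Variables (O : idomainType) (pi : O) (Lam : algType O) (n : nat) (b : 'I_n -> Lam).
Hypothesis Hb : is_basis b.
Hypothesis Hpi : dvr_uniformizer pi.
Variable d : nat.
Variable E : 'M[O]_n.
Hypothesis HE1 : \sum_i \sum_j E i j *: (b i * b j) = pi ^+ d *: 1.
Hypothesis HE2 : forall x beta, bilin beta ->
    \sum_i \sum_j E i j *: beta (x * b i) (b j) =
    \sum_i \sum_j E i j *: beta (b i) (b j * x).

Local Notation dv := (dv pi).
Local Notation eqm := (eqm pi).

Definition homm m (f : Lam -> Lam) := forall x y, dv m (f x * f y - f (x * y)).
Definition Sop (F : 'I_n -> 'I_n -> Lam) := \sum_i \sum_j E i j *: F i j.

Lemma SopB F G : Sop (fun i j => F i j - G i j) = Sop F - Sop G.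
Proof.
rewrite /Sop -sumrB; apply: eq_bigr => i _; rewrite -sumrB.
by apply: eq_bigr => j _; rewrite scalerBr.
Qed.
Lemma SopD F G : Sop (fun i j => F i j + G i j) = Sop F + Sop G.
Proof.
rewrite /Sop -big_split; apply: eq_bigr => i _; rewrite -big_split.
by apply: eq_bigr => j _; rewrite scalerDr.
Qed.
Lemma SopZ a F : Sop (fun i j => a *: F i j) = a *: Sop F.
Proof.
rewrite /Sop scaler_sumr; apply: eq_bigr => i _; rewrite scaler_sumr.
by apply: eq_bigr => j _; rewrite !scalerA mulrC.
Qed.
Lemma SopMl u F : Sop (fun i j => u * F i j) = u * Sop F.
Proof.
rewrite /Sop mulr_sumr; apply: eq_bigr => i _; rewrite mulr_sumr.
by apply: eq_bigr => j _; rewrite scalerAr.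
Qed.
Lemma SopMr F u : Sop (fun i j => F i j * u) = Sop F * u.
Proof.
rewrite /Sop mulr_suml; apply: eq_bigr => i _; rewrite mulr_suml.
by apply: eq_bigr => j _; rewrite scalerAl.
Qed.
Lemma Sop_ext F G : (forall i j, F i j = G i j) -> Sop F = Sop G.
Proof.
by move=> h; rewrite /Sop; apply: eq_bigr => i _; apply: eq_bigr => j _; rewrite h.
Qed.
Lemma Sop_dv m F : (forall i j, dv m (F i j)) -> dv m (Sop F).
Proof.
move=> h; apply: dv_sum => i; apply: dv_sum => j; apply: dvZ; exact: h.
Qed.
Lemma Sop_eqm m F G : (forall i j, eqm m (F i j) (G i j)) -> eqm m (Sop F) (Sop G).
Proof. by move=> h; rewrite /eqm -SopB; apply: Sop_dv. Qed.

Lemma lin_sumF f (I : finType) (F : I -> Lam) : lin f -> f (\sum_i F i) = \sum_i f (F i).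
Proof.
move=> hf; apply: (big_rec2 (fun y1 y2 => f y1 = y2)); first exact: lin0.
by move=> j y1 y2 _ <-; rewrite (proj1 hf).
Qed.
Lemma Sop_lin f F : lin f -> f (Sop F) = Sop (fun i j => f (F i j)).
Proof.
move=> hf; rewrite /Sop lin_sumF //; apply: eq_bigr => i _; rewrite lin_sumF //.
by apply: eq_bigr => j _; rewrite (proj2 hf).
Qed.

Lemma one_fix m f : (0 < m)%N -> dv 1 (f 1 - 1) -> homm m f -> dv m (f 1 - 1).
Proof.
move=> m0 h1 hm; set e := f 1 - 1.
have f1 : f 1 = e + 1 by rewrite /e subrK.
have hm1 : dv m (e + e * e).
  have := hm 1 1; rewrite mul1r f1 mulrDr mulr1 addrK mulrDl mul1r addrC //.
suff : forall k, (k <= m)%N -> dv k e by apply.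
elim=> [|k ih] km; first by exists e; rewrite expr0 scale1r.
case: k ih km => [|k] ih km; first exact: h1.
have hk : dv k.+1 e := ih (ltnW km).
have := dvB (dv_le km hm1) (dv_le (_ : (k.+2 <= k.+1 + k.+1)%N) (dvM2 hk hk)).
by rewrite addrK; apply; lia.
Qed.

Lemma step m f : lin f -> homm m f -> dv 1 (f 1 - 1) -> (2 * d < m)%N ->
  exists f', [/\ lin f', homm (2 * (m - d)) f', dv 1 (f' 1 - 1) &
                 forall x, dv (m - d) (f' x - f x)].
Proof.
move=> hf hm h1 hmd.
have dm : (d <= m)%N by lia.
have hc : forall x y, exists z, f x * f y - f (x * y) = pi ^+ m *: z := hm.
pose c x y := proj1_sig (constructive_indefinite_description _ (hc x y)).
have cE : forall x y, f x * f y - f (x * y) = pi ^+ m *: c x y.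
  by move=> x y; rewrite /c; case: constructive_indefinite_description.
have cD1 x x' y : c (x + x') y = c x y + c x' y.
  apply: (scale_inj Hb Hpi (m:=m)); rewrite scalerDr -!cE.
  by rewrite mulrDl !(proj1 hf) mulrDl opprD addrACA.
have cZ1 a x y : c (a *: x) y = a *: c x y.
  apply: (scale_inj Hb Hpi (m:=m)); rewrite scalerA mulrC -scalerA -!cE.
  by rewrite (proj2 hf) -scalerAl -scalerAl (proj2 hf) scalerBr.
have cD2 x y y' : c x (y + y') = c x y + c x y'.
  apply: (scale_inj Hb Hpi (m:=m)); rewrite scalerDr -!cE.
  by rewrite mulrDr !(proj1 hf) mulrDr opprD addrACA.
have cZ2 a x y : c x (a *: y) = a *: c x y.
  apply: (scale_inj Hb Hpi (m:=m)); rewrite scalerA mulrC -scalerA -!cE.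
  by rewrite (proj2 hf) -scalerAr -scalerAr (proj2 hf) scalerBr.
have coc u v w : f u * c v w - c (u * v) w + c u (v * w) - c u v * f w = 0.
  apply: (scale_inj Hb Hpi (m:=m)); rewrite scaler0 scalerBr scalerDr scalerBr.
  rewrite scalerAr scalerAl -!cE.
  by rewrite mulrBr mulrBl !mulrA zcoc.
pose g z := Sop (fun i j => f (b i) * c (b j) z).
have lg : lin g.
  split => [z z'|a z]; rewrite /g.
    by rewrite -SopD; apply: Sop_ext => i j; rewrite cD2 mulrDr.
  by rewrite -SopZ; apply: Sop_ext => i j; rewrite cZ2 scalerAr.
pose k := (m - d)%N.
have kdm : (k + d = m)%N by rewrite /k subnK.
pose f' x := f x - pi ^+ k *: g x.
have lf' : lin f'.
  split => [x y|a x]; rewrite /f'.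
    by rewrite (proj1 hf) (proj1 lg) scalerDr opprD addrACA.
  by rewrite (proj2 hf) (proj2 lg) scalerA mulrC -scalerA scalerBr.
have hdf : forall x, dv k (f' x - f x).
  by move=> x; rewrite /f' addrAC subrr add0r; apply: dvN; apply: dvP.
exists f'; split => //; last first.
- have := dvD (dv_le (_ : (1 <= k)%N) (hdf 1)) h1.
  by rewrite tele; apply; rewrite /k; lia.
move=> x y.
pose D := f x * g y + g x * f y - g (x * y).
have bil : bilin (fun u v => f u * c v y).
  split => [v|u]; split => [x1 x2|a x1].
  - by rewrite (proj1 hf) mulrDl.
  - by rewrite (proj2 hf) -scalerAl.
  - by rewrite cD1 mulrDr.
  - by rewrite cZ1 scalerAr.
have A1' : eqm m (f x * g y) (Sop (fun i j => f (b i) * c (b j * x) y)).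
  have -> : f x * g y = Sop (fun i j => f x * f (b i) * c (b j) y).
    by rewrite /g -SopMl; apply: Sop_ext => i j; rewrite mulrA.
  have h2 : Sop (fun i j => f (x * b i) * c (b j) y) =
            Sop (fun i j => f (b i) * c (b j * x) y) := HE2 x bil.
  rewrite -h2; apply: Sop_eqm => i j; apply: eqmM; [exact: hm | exact: eqm_refl].
have A23 : g x * f y - g (x * y) =
    Sop (fun i j => f (b i) * f (b j) * c x y) - Sop (fun i j => f (b i) * c (b j * x) y).
  rewrite /g -SopMr -!SopB; apply: Sop_ext => i j.
  rewrite -mulrA -mulrBr -mulrA -mulrBr; congr (_ * _).
  by move: (coc (b j) x y); move/eqP; rewrite subr_eq0 => /eqP <-; rewrite addrK.
have eqD : eqm m D (Sop (fun i j => f (b i) * f (b j) * c x y)).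
  rewrite /D -addrA A23.
  apply: eqm_trans; first exact: (eqmD A1' (eqm_refl _ _ _)).
  by apply: eqm_eq; rewrite addrC subrK.
have eqF : eqm m (Sop (fun i j => f (b i) * f (b j))) (pi ^+ d *: 1).
  apply: eqm_trans; first by apply: (Sop_eqm (G := fun i j => f (b i * b j))) => i j; exact: hm.
  rewrite -Sop_lin //.
  have -> : Sop (fun i j => b i * b j) = pi ^+ d *: 1 by exact: HE1.
  rewrite (proj2 hf); apply: eqmZ; apply: one_fix => //; lia.
have eqS : eqm m (Sop (fun i j => f (b i) * f (b j) * c x y)) (pi ^+ d *: c x y).
  have -> : Sop (fun i j => f (b i) * f (b j) * c x y) =
            Sop (fun i j => f (b i) * f (b j)) * c x y by rewrite -SopMr.
  apply: eqm_trans; first exact: (eqmM eqF (eqm_refl _ _ (c x y))).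
  by apply: eqm_eq; rewrite -scalerAl mul1r.
have claim : dv m (pi ^+ d *: c x y - D).
  by apply: eqm_sym; apply: eqm_trans eqD eqS.
have -> : f' x * f' y - f' (x * y) =
    pi ^+ k *: (pi ^+ d *: c x y - D) + pi ^+ k *: (pi ^+ k *: (g x * g y)).
  rewrite /f' mulrBr !mulrBl -!scalerAl -!scalerAr zmod6.
  rewrite cE -kdm exprD -scalerA; congr (_ + _).
  rewrite scalerBr; congr (_ - _).
  by rewrite /D scalerBr scalerDr.
apply: dvD.
  by apply: (dv_le (_ : (2 * k <= k + m)%N)); [rewrite -kdm; lia | apply: dvX].
rewrite scalerA -exprD; apply: (dv_le (_ : (2 * k <= k + k)%N)); [lia | exact: dvP].
Qed.
End Step.


Section Lift.
Variables (O : idomainType) (pi : O) (Lam : algType O) (n : nat) (b : 'I_n -> Lam).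
Hypothesis Hb : is_basis b.
Hypothesis Hpi : dvr_uniformizer pi.
Hypothesis Hcomp : pi_complete pi.
Variable d : nat.
Variable E : 'M[O]_n.
Hypothesis HE1 : \sum_i \sum_j E i j *: (b i * b j) = pi ^+ d *: 1.
Hypothesis HE2 : forall x beta, bilin beta ->
    \sum_i \sum_j E i j *: beta (x * b i) (b j) =
    \sum_i \sum_j E i j *: beta (b i) (b j * x).
Variable s : nat.
Hypothesis Hds : (d <= s)%N.
Variable f0 : Lam -> Lam.
Hypothesis hf0 : lin f0.
Hypothesis hm0 : homm pi (2 * s).+1 f0.
Hypothesis h10 : dv pi 1 (f0 1 - 1).

Definition Pk m (f : Lam -> Lam) := [/\ lin f, homm pi m f, dv pi 1 (f 1 - 1) & (2 * d < m)%N].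
Fixpoint ms k := if k is k'.+1 then (2 * (ms k' - d))%N else (2 * s).+1.

Lemma P0 : Pk (ms 0) f0.
Proof. split => //=; lia. Qed.

Lemma step' m f : Pk m f -> exists f', Pk (2 * (m - d)) f' /\
   forall x, dv pi (m - d) (f' x - f x).
Proof.
case=> h1 h2 h3 h4; have [f' [a1 a2 a3 a4]] := step Hb Hpi HE1 HE2 h1 h2 h3 h4.
by exists f'; split => //; split => //; lia.
Qed.

Fixpoint fs k : {f | Pk (ms k) f} :=
  match k return {f | Pk (ms k) f} with
  | 0 => exist _ f0 P0
  | k'.+1 => let: exist f hf := fs k' in
      let w := constructive_indefinite_description _ (step' hf) in
      exist _ (proj1_sig w) (proj1 (proj2_sig w))
  end.

Definition F k := proj1_sig (fs k).
Lemma FP k : Pk (ms k) (F k). Proof. exact: (proj2_sig (fs k)). Qed.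
Lemma F_step k x : dv pi (ms k - d) (F k.+1 x - F k x).
Proof.
rewrite /F /=; case: (fs k) => f hf /=.
by case: constructive_indefinite_description => f' [? h] /=.
Qed.

Lemma ms_gt k : (2 * d < ms k)%N.
Proof. elim: k => [|k ih] /=; lia. Qed.
Lemma ms_S k : (ms k < ms k.+1)%N.
Proof. by have := ms_gt k; rewrite /=; lia. Qed.
Lemma ms_mono i j : (i <= j)%N -> (ms i <= ms j)%N.
Proof.
elim: j => [|j ih]; first by rewrite leqn0 => /eqP ->.
rewrite leq_eqVlt => /orP [/eqP -> //| hij].
by have := ih hij; have := ms_S j; lia.
Qed.
Lemma ms_ge k : (k <= ms k)%N.
Proof. by elim: k => [|k ih] //; have := ms_S k; lia. Qed.

Lemma F_cauchy x i j : (i <= j)%N -> dv pi (ms i - d) (F j x - F i x).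
Proof.
elim: j => [|j ih].
  by rewrite leqn0 => /eqP ->; rewrite subrr; apply: dv0.
rewrite leq_eqVlt => /orP [/eqP -> | hij]; first by rewrite subrr; apply: dv0.
rewrite -(tele (F j.+1 x) (F j x)); apply: dvD; last exact: ih.
rewrite ltnS in hij; apply: (dv_le _ (F_step j x)); have := ms_mono hij; lia.
Qed.

Lemma F0 : F 0 = f0. Proof. by []. Qed.

Lemma F_near0 k x : dv pi s.+1 (F k x - f0 x).
Proof.
have := F_cauchy x (leq0n k); rewrite F0; apply: dv_le => /=; lia.
Qed.

Lemma cauchy_b j : forall N, exists M, forall i i', (M <= i)%N -> (M <= i')%N ->
  dv pi N (F i (b j) - F i' (b j)).
Proof.
move=> N; exists (N + d)%N => i i' hi hi'.
rewrite -(tele2 (F i (b j)) (F i' (b j)) (F (N + d) (b j))).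
have hM := ms_ge (N + d).
by apply: dvB; apply: (dv_le _ (F_cauchy _ _)) => //; lia.
Qed.

Definition L j := proj1_sig (constructive_indefinite_description _
  (Lam_complete Hb Hcomp (cauchy_b j))).
Lemma L_conv j N : exists M, forall i, (M <= i)%N -> dv pi N (L j - F i (b j)).
Proof. by rewrite /L; case: constructive_indefinite_description. Qed.

Definition alpha x := \sum_j crd Hb x j *: L j.

Lemma alpha_conv x N k : (N + d <= k)%N -> dv pi N (alpha x - F k x).
Proof.
move=> hk; have [hl _ _ _] := FP k.
rewrite (lin_expand Hb x hl) /alpha -sumrB; apply: dv_sum => j.
rewrite -scalerBr; apply: dvZ.
have [M hM] := L_conv j N.
rewrite -(tele (L j) (F (maxn M k) (b j))); apply: dvD; first exact: hM (leq_maxl _ _).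
apply: (dv_le _ (F_cauchy _ (leq_maxr M k))).
have := ms_ge k; lia.
Qed.

Lemma alpha_lin : lin alpha.
Proof.
split => [x y|a x]; rewrite /alpha.
  by rewrite -big_split; apply: eq_bigr => j _; rewrite crdD scalerDl.
by rewrite scaler_sumr; apply: eq_bigr => j _; rewrite crdZ scalerA.
Qed.

Lemma alpha_mul x y : alpha (x * y) = alpha x * alpha y.
Proof.
apply/eqP; rewrite -subr_eq0; apply/eqP; apply: (dv_all0 Hb Hpi) => N.
pose k := (N + d)%N.
have [_ hm _ _] := FP k.
have hk : (N <= ms k)%N by have := ms_ge k; rewrite /k; lia.
have e1 := alpha_conv x (leqnn k).
have e2 := alpha_conv y (leqnn k).
have e3 := alpha_conv (x * y) (leqnn k).
have e4 : eqm pi N (F k x * F k y) (F k (x * y)) := dv_le hk (hm x y).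
apply: eqm_trans; first exact: e3.
apply: eqm_sym; apply: eqm_trans; first exact: (eqmM e1 e2).
exact: e4.
Qed.

Lemma alpha1 : alpha 1 = 1.
Proof.
apply/eqP; rewrite -subr_eq0; apply/eqP; apply: (dv_all0 Hb Hpi) => N.
pose k := (N + d)%N.
have [_ hm h1 _] := FP k.
have hk : (N <= ms k)%N by have := ms_ge k; rewrite /k; lia.
have e1 := alpha_conv 1 (leqnn k).
apply: eqm_trans; first exact: e1.
apply: (dv_le hk); apply: one_fix => //; have := ms_gt k; lia.
Qed.

Lemma alpha_near x : dv pi s.+1 (alpha x - f0 x).
Proof.
rewrite -(tele (alpha x) (F (s.+1 + d) x)); apply: dvD; last exact: F_near0.
exact: alpha_conv.
Qed.
End Lift.

Lemma lift_aut (O : idomainType) (pi : O) (Lam : algType O) (n : nat) (b : 'I_n -> Lam)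
  (Hb : is_basis b) (Hpi : dvr_uniformizer pi) (Hcomp : pi_complete pi) (d : nat)
  (E : 'M[O]_n)
  (HE1 : \sum_i \sum_j E i j *: (b i * b j) = pi ^+ d *: 1)
  (HE2 : forall x beta, bilin beta ->
    \sum_i \sum_j E i j *: beta (x * b i) (b j) =
    \sum_i \sum_j E i j *: beta (b i) (b j * x))
  (s : nat) (Hds : (d <= s)%N) (f0 : Lam -> Lam) :
  lin f0 -> homm pi (2 * s).+1 f0 -> dv pi 1 (f0 1 - 1) ->
  exists alpha, [/\ lin alpha, (forall x y, alpha (x * y) = alpha x * alpha y),
     alpha 1 = 1 & forall x, dv pi s.+1 (alpha x - f0 x)].
Proof.
move=> hf0 hm0 h10.
exists (alpha Hb Hpi Hcomp HE1 HE2 Hds hf0 hm0 h10); split.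
- exact: alpha_lin.
- exact: alpha_mul.
- exact: alpha1.
- exact: alpha_near.
Qed.


Section Bij.
Variables (O : idomainType) (pi : O) (Lam : algType O) (n : nat) (b : 'I_n -> Lam).
Hypothesis Hb : is_basis b.
Hypothesis Hpi : dvr_uniformizer pi.

Definition R1 (x y : O) := pdvd pi 1 (x - y).

Lemma R1D x y x' y' : R1 x y -> R1 x' y' -> R1 (x + x') (y + y').
Proof.
move=> [c e] [c' e']; exists (c + c').
by rewrite opprD addrACA e e' mulrDr.
Qed.
Lemma R1M x y x' y' : R1 x y -> R1 x' y' -> R1 (x * x') (y * y').
Proof.
move=> [c e] [c' e']; exists (c * x' + y * c').
have -> : x * x' - y * y' = (x - y) * x' + y * (x' - y').
  by rewrite mulrBl mulrBr addrA subrK.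
by rewrite e e' -mulrA [y * _]mulrCA -mulrDr.
Qed.
Lemma R1refl x : R1 x x.
Proof. by exists 0; rewrite subrr mulr0. Qed.

Lemma det_congr (M N : 'M[O]_n) : (forall i j, R1 (M i j) (N i j)) -> R1 (\det M) (\det N).
Proof.
move=> h; rewrite /determinant.
apply: (big_ind2 R1); [exact: R1refl | exact: R1D |] => sg _.
apply: R1M; first exact: R1refl.
apply: (big_ind2 R1); [exact: R1refl | exact: R1M |] => i _; exact: h.
Qed.

Lemma lin_bij (alpha : Lam -> Lam) : lin alpha -> (forall y, exists x, dv pi 1 (alpha x - y)) ->
  bijective alpha.
Proof.
move=> hl hs.
pose A : 'M[O]_n := \matrix_(i, j) crd Hb (alpha (b j)) i.
have Aapp : forall x i, crd Hb (alpha x) i = \sum_j A i j * crd Hb x j.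
  move=> x i; rewrite (lin_expand Hb x hl) crd_sum; apply: eq_bigr => j _.
  by rewrite mxE mulrC.
pose xs l := proj1_sig (constructive_indefinite_description _ (hs (b l))).
have hxs l : dv pi 1 (alpha (xs l) - b l).
  by rewrite /xs; case: constructive_indefinite_description.
pose X : 'M[O]_n := \matrix_(j, l) crd Hb (xs l) j.
have AX : forall i l, R1 ((A *m X) i l) ((1%:M : 'M[O]_n) i l).
  move=> i l; rewrite !mxE.
  have -> : \sum_j A i j * X j l = crd Hb (alpha (xs l)) i.
    by rewrite Aapp; apply: eq_bigr => j _; rewrite !mxE.
  by have := proj1 (dv_crd pi Hb 1 _) (hxs l) i; rewrite crdB crd_b.
have dAX := det_congr AX; rewrite det1 in dAX.
have uA : A \in unitmx.
  rewrite unitmxE; have := unit_near1 Hpi dAX; rewrite det_mulmx unitrM.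
  by case/andP.
have inj : forall x, alpha x = 0 -> x = 0.
  move=> x ax.
  pose cx : 'cV[O]_n := \col_j crd Hb x j.
  have Acx : A *m cx = 0.
    apply/matrixP => i k; rewrite !mxE -[RHS](crd0 Hb i) -ax Aapp.
    by apply: eq_bigr => j _; rewrite /cx !mxE.
  have cx0 : cx = 0 by rewrite -(mulKmx uA cx) Acx mulmx0.
  apply: (crd_inj (Hb:=Hb)) => j; rewrite crd0.
  by have := congr1 (fun M : 'cV[O]_n => M j 0) cx0; rewrite /cx /= !mxE.
pose g y := \sum_j (invmx A *m \col_i crd Hb y i) j 0 *: b j.
have gK : forall y, alpha (g y) = y.
  move=> y; apply: (crd_inj (Hb:=Hb)) => i; rewrite Aapp.
  have hc : forall j, crd Hb (g y) j = (invmx A *m \col_i crd Hb y i) j 0.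
    move=> j; rewrite /g crd_sum (bigD1 j) //= crd_b eqxx mulr1 big1 ?addr0 //.
    by move=> k /negbTE hk; rewrite crd_b eq_sym hk mulr0.
  under eq_bigr do rewrite hc.
  have := congr1 (fun M : 'cV[O]_n => M i 0) (mulKVmx uA (\col_i crd Hb y i)).
  by rewrite /= !mxE => <-; apply: eq_bigr => j _.
exists g => // x.
apply/eqP; rewrite -subr_eq0; apply/eqP; apply: inj.
by rewrite linB // gK subrr.
Qed.
End Bij.


Unset Implicit Arguments.
Theorem lemma3p4 (p : nat) (O : idomainType) (pi : O) (Lam : algType O)
  (d s : nat) :
  pmodular_system p pi -> pi_complete pi -> is_order Lam ->
  is_depth pi Lam d -> (d <= s)%N ->
  forall phi : Lam -> Lam, is_aut_mod pi s.+1 phi ->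
    (exists alpha : Lam -> Lam,
        is_aut alpha /\ forall x, congr pi s.+1 (alpha x) (phi x)) <->
    (exists psi : Lam -> Lam,
        is_aut_mod pi (2 * s).+1 psi /\ forall x, congr pi s.+1 (psi x) (phi x)).
Proof.
move=> Hps Hcomp Hord Hdep Hds phi Hphi.
have Hpi : dvr_uniformizer pi by case: Hps.
have [n [b [Hb _]]] := Hord.
have Hann : annihilates_H1 Lam (pi ^+ d).
  by apply/(Hdep (pi ^+ d)); exists 1; rewrite mulr1.
have [E [HE1 HE2]] := sep_exists Hb Hann.
split.
- case=> alpha [[aD aZ aM a1 [g ag ga]] hcl].
  have la : lin alpha by split.
  have gZ a z : g (a *: z) = a *: g z.
    by rewrite -{1}(ga z) -aZ ag.
  exists alpha; split => //.
  split; first by move=> x y [z e]; exists (alpha z); rewrite -linB // e aZ.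
  split; first by move=> x y; rewrite /congr aD subrr; exact: dv0.
  split; first by move=> a x; rewrite /congr aZ subrr; exact: dv0.
  split; first by move=> x y; rewrite /congr aM subrr; exact: dv0.
  split; first by rewrite /congr a1 subrr; exact: dv0.
  split; first by move=> x y [z e]; exists (g z); rewrite -(ag (x - y)) linB // e gZ.
  by move=> y; exists (g y); rewrite /congr ga subrr; exact: dv0.
- case=> psi [[pc [pD [pZ [pM [p1 [pinj psurj]]]]]] hcl].
  have phisurj := proj2 (proj2 (proj2 (proj2 (proj2 (proj2 Hphi))))).
  pose M := (2 * s).+1.
  pose f0 x := \sum_j crd Hb x j *: psi (b j).
  have lf0 : lin f0.
    split => [x y|a x]; rewrite /f0.
      by rewrite -big_split; apply: eq_bigr => j _; rewrite crdD scalerDl.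
    by rewrite scaler_sumr; apply: eq_bigr => j _; rewrite crdZ scalerA.
  have f0psi : forall x, eqm pi M (psi x) (f0 x).
    move=> x; rewrite {1}(crdK Hb x) /f0.
    apply: (big_ind2 (fun a c => eqm pi M (psi a) c)).
    + have := dvN (pD 0 0); rewrite addr0 opprB addrK => h.
      by rewrite /eqm subr0.
    + move=> x1 x2 y1 y2 h1 h2; apply: eqm_trans; first exact: (pD x1 y1).
      exact: eqmD.
    + move=> i _; exact: pZ.
  have hm0 : homm pi M f0.
    move=> x y; apply: eqm_trans; first exact: (eqmM (eqm_sym (f0psi x)) (eqm_sym (f0psi y))).
    apply: eqm_trans; first exact: (eqm_sym (pM x y)).
    exact: f0psi.
  have h10 : dv pi 1 (f0 1 - 1).
    apply: (dv_le (_ : (1 <= M)%N)) => //.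
    apply: eqm_trans; first exact: (eqm_sym (f0psi 1)).
    exact: p1.
  have [alpha [la aM a1 anear]] := lift_aut Hb Hpi Hcomp HE1 HE2 Hds lf0 hm0 h10.
  have hclose : forall x, eqm pi s.+1 (alpha x) (phi x).
    move=> x; apply: eqm_trans; first exact: anear.
    apply: eqm_trans; last exact: hcl.
    apply: (dv_le (_ : (s.+1 <= M)%N)); first by rewrite /M; lia.
    exact: eqm_sym.
  have surj : forall y, exists x, dv pi 1 (alpha x - y).
    move=> y; have [x hx] := phisurj y; exists x.
    apply: (dv_le (_ : (1 <= s.+1)%N)) => //.
    exact: eqm_trans (hclose x) hx.
  exists alpha; split => //.
  split; [exact: (proj1 la) | exact: (proj2 la) | exact: aM | exact: a1 |].
  exact: (lin_bij Hb Hpi la surj).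
Qed.
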